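(* Let $M\models\mathrm{AA}$, let $I\subseteq M$ be a proper cut and let $D\subseteq M$ be formula-definable. (i) If $1\le y$ for all $y\in M\setminus I$ and $M\setminus I\subseteq D$, then for each $\epsilon>0$ there exists $a\in I$ such that $[a,\infty)\subseteq D^\epsilon$. (ii) Assume $I<M\setminus I$. If for every $a\in M\setminus I$ there is $u\in (M\setminus I)\cap D$ with $u\le a$, then for every $\epsilon>0$ and every $b\in I$ there is $v\in I\cap D^\epsilon$ with $b\le v$.
   Context: Structures are complete metric spaces of diameter at most $1$ in the language $L=\{+,\cdot,\wedge,\vee,0,1\}$ (operations $1$-Lipschitz, $d$ the only relation symbol). Affine formulas are built from $1$ and atomic formulas $d(t_1,t_2)$ using $+$, scalar multiplication by reals, $\sup_x$, $\inf_x$. $\mathrm{AA}$ is the set of all closed affine conditions true in every model of first-order Peano arithmetic (formulated in $L$ with lattice operations min/max and discrete metric). $x\le y$ means $x\wedge y=x$, $x<y$ means $x\le y$, $x\ne y$; $[a,\infty)=\{u: a\le u\}$. A cut is a nonempty $I\subseteq M$ with $x\le y\in I\Rightarrow x\in I$ and $x\in I\Rightarrow x+1\in I$; proper means $I\ne M$; $I<M\setminus I$ means $x<y$ for all $x\in I$, $y\notin I$. A set $D$ is formula-definable if it is closed and $d(x,D)=\phi^M(x)$ for all $x$ for some affine formula $\phi$ with parameters from $M$. $D^\epsilon=\{x\in M: d(x,D)<\epsilon\}$. *)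

(* Defs.v *)
From HB Require Import structures.
From mathcomp Require Import all_boot all_order all_algebra.
From mathcomp Require Import boolp classical_sets reals Rstruct.
Set Implicit Arguments. Unset Strict Implicit. Unset Printing Implicit Defensive.
Import Order.TTheory GRing.Theory Num.Theory.
Local Open Scope ring_scope.
Local Open Scope classical_set_scope.

Notation R := Rdefinitions.R.

Record Lpre := {
  car :> Type;
  dist : car -> car -> R;
  Ladd : car -> car -> car;
  Lmul : car -> car -> car;
  Lmeet : car -> car -> car;
  Ljoin : car -> car -> car;
  Lzero : car;
  Lone : car }.

Definition lip1 (M : Lpre) (f : M -> M -> M) :=
  forall x y x' y' : M, dist (f x y) (f x' y') <= Num.max (dist x x') (dist y y').

Definition is_Lstructure (M : Lpre) : Prop :=
  [/\ [/\ (forall x y : M, 0 <= dist x y),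
      (forall x y : M, dist x y = 0 <-> x = y),
      (forall x y : M, dist x y = dist y x) &
      (forall x y z : M, dist x z <= dist x y + dist y z)],
      (forall x y : M, dist x y <= 1),
      (forall u : nat -> M,
         (forall e : R, 0 < e -> exists N, forall m n, (N <= m)%N -> (N <= n)%N ->
              dist (u m) (u n) < e) ->
         exists l : M, forall e : R, 0 < e -> exists N, forall n, (N <= n)%N ->
              dist (u n) l < e) &
      [/\ lip1 (@Ladd M), lip1 (@Lmul M), lip1 (@Lmeet M) & lip1 (@Ljoin M)]].

Inductive Lterm :=
  | TVar of nat | TZero | TOne
  | TAdd of Lterm & Lterm | TMul of Lterm & Lterm
  | TMeet of Lterm & Lterm | TJoin of Lterm & Lterm.

Inductive Aform :=
  | AOne
  | ADist of Lterm & Lterm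
  | APlus of Aform & Aform
  | AScale of R & Aform
  | ASup of nat & Aform
  | AInf of nat & Aform.

Fixpoint term_fv (n : nat) (t : Lterm) : bool :=
  match t with
  | TVar k => k == n
  | TZero | TOne => false
  | TAdd a b | TMul a b | TMeet a b | TJoin a b => term_fv n a || term_fv n b
  end.

Fixpoint form_fv (n : nat) (f : Aform) : bool :=
  match f with
  | AOne => false
  | ADist a b => term_fv n a || term_fv n b
  | APlus a b => form_fv n a || form_fv n b
  | AScale _ a => form_fv n a
  | ASup k a | AInf k a => (k != n) && form_fv n a
  end.

Definition sentence (f : Aform) : Prop := forall n, ~~ form_fv n f.

Definition upd (T : Type) (e : nat -> T) (n : nat) (a : T) : nat -> T :=
  fun k => if k == n then a else e k.

Fixpoint term_eval (M : Lpre) (e : nat -> M) (t : Lterm) : M :=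
  match t with
  | TVar k => e k
  | TZero => Lzero M
  | TOne => Lone M
  | TAdd a b => Ladd (term_eval e a) (term_eval e b)
  | TMul a b => Lmul (term_eval e a) (term_eval e b)
  | TMeet a b => Lmeet (term_eval e a) (term_eval e b)
  | TJoin a b => Ljoin (term_eval e a) (term_eval e b)
  end.

Fixpoint aeval (M : Lpre) (e : nat -> M) (f : Aform) : R :=
  match f with
  | AOne => 1
  | ADist a b => dist (term_eval e a) (term_eval e b)
  | APlus a b => aeval e a + aeval e b
  | AScale r a => r * aeval e a
  | ASup k a => sup [set aeval (upd e k x) a | x in [set: car M]]
  | AInf k a => inf [set aeval (upd e k x) a | x in [set: car M]]
  end.

Record PApre := {
  pcar :> Type;
  padd : pcar -> pcar -> pcar;
  pmul : pcar -> pcar -> pcar;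
  pzero : pcar;
  pone : pcar }.

Inductive Pterm :=
  | PVar of nat | PZero | POne | PAdd of Pterm & Pterm | PMul of Pterm & Pterm.

Inductive Pform :=
  | PEq of Pterm & Pterm
  | PBot
  | PImp of Pform & Pform
  | PAll of nat & Pform.

Fixpoint pterm_eval (N : PApre) (e : nat -> N) (t : Pterm) : N :=
  match t with
  | PVar k => e k
  | PZero => pzero N
  | POne => pone N
  | PAdd a b => padd (pterm_eval e a) (pterm_eval e b)
  | PMul a b => pmul (pterm_eval e a) (pterm_eval e b)
  end.

Fixpoint psat (N : PApre) (e : nat -> N) (f : Pform) : Prop :=
  match f with
  | PEq a b => pterm_eval e a = pterm_eval e b
  | PBot => False
  | PImp a b => psat e a -> psat e b
  | PAll k a => forall x : N, psat (upd e k x) a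
  end.

Definition PA_model (N : PApre) : Prop :=
  [/\ [/\ (forall x : N, padd x (pone N) <> pzero N),
      (forall x y : N, padd x (pone N) = padd y (pone N) -> x = y) &
      (forall x : N, padd x (pzero N) = x)],
      (forall x y : N, padd x (padd y (pone N)) = padd (padd x y) (pone N)),
      (forall x : N, pmul x (pzero N) = pzero N),
      (forall x y : N, pmul x (padd y (pone N)) = padd (pmul x y) x) &
      (forall (phi : Pform) (n : nat) (e : nat -> N),
         psat (upd e n (pzero N)) phi ->
         (forall a : N, psat (upd e n a) phi -> psat (upd e n (padd a (pone N))) phi) ->
         forall a : N, psat (upd e n a) phi)].

Definition PA_le (N : PApre) (x y : N) : Prop := exists z, padd x z = y.

Definition PA_to_L (N : PApre) : Lpre := {|
  car := pcar N;
  dist := fun x y => if `[< x = y >] then 0 else 1;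
  Ladd := @padd N;
  Lmul := @pmul N;
  Lmeet := fun x y => if `[< PA_le x y >] then x else y;
  Ljoin := fun x y => if `[< PA_le x y >] then y else x;
  Lzero := pzero N;
  Lone := pone N |}.

Definition AA (phi : Aform) : Prop :=
  sentence phi /\
  forall N : PApre, PA_model N -> forall e : nat -> N, 0 <= aeval (M := PA_to_L N) e phi.

Definition models_AA (M : Lpre) : Prop :=
  forall phi, AA phi -> forall e : nat -> M, 0 <= aeval e phi.

Definition Mle (M : Lpre) (x y : M) : Prop := Lmeet x y = x.
Definition Mlt (M : Lpre) (x y : M) : Prop := Mle x y /\ x <> y.

Definition is_cut (M : Lpre) (I : set M) : Prop :=
  [/\ I !=set0,
      (forall x y : M, Mle x y -> I y -> I x) &
      (forall x : M, I x -> I (Ladd x (Lone M)))].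

Definition proper_cut (M : Lpre) (I : set M) : Prop := is_cut I /\ I <> [set: car M].

Definition dist_set (M : Lpre) (x : M) (D : set M) : R :=
  inf [set dist x y | y in D].

Definition closed_set (M : Lpre) (D : set M) : Prop :=
  forall x : M, (forall e : R, 0 < e -> exists2 y, D y & dist x y < e) -> D x.

(* D is formula-definable: closed and d(x,D) = phi^M(x, params), x being
   variable 0 and the parameters the values of the other variables. *)
Definition formula_definable (M : Lpre) (D : set M) : Prop :=
  closed_set D /\
  exists (phi : Aform) (e : nat -> M), forall x : M, dist_set x D = aeval (upd e 0 x) phi.

Definition thicken (M : Lpre) (D : set M) (eps : R) : set M :=
  [set x | dist_set x D < eps].

(* Main.v *)
Require Import Defs.
From HB Require Import structures.
From mathcomp Require Import all_boot all_order all_algebra.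
From mathcomp Require Import boolp classical_sets reals Rstruct.
From mathcomp Require Import ring lra zify.
From Stdlib Require Import Classical List.
Import Order.TTheory GRing.Theory Num.Theory.
Local Open Scope ring_scope.
Local Open Scope classical_set_scope.
Set Implicit Arguments. Unset Strict Implicit. Unset Printing Implicit Defensive.

Lemma upd_same (T : Type) (e : nat -> T) k : upd e k (e k) = e.
Proof. apply: funext => j; rewrite /upd; case: eqP => [->|] //. Qed.

Lemma upd_eq (T : Type) (e : nat -> T) k a : upd e k a k = a.
Proof. by rewrite /upd eqxx. Qed.

Lemma upd_neq (T : Type) (e : nat -> T) k a j : j != k -> upd e k a j = e j.
Proof. by rewrite /upd => /negbTE ->. Qed.

Lemma sup_img_ub (T : Type) (f : T -> R) (B : R) :
  (forall x, f x <= B) -> forall a, f a <= sup [set f x | x in [set: T]].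
Proof.
move=> hB a; apply: (ub_le_sup (E := [set f x | x in [set: T]])).
  by exists B => y [x _ <-].
by exists a.
Qed.

Lemma sup_img_le (T : Type) (f : T -> R) (B : R) (t0 : T) :
  (forall x, f x <= B) -> sup [set f x | x in [set: T]] <= B.
Proof.
move=> hB; apply: ge_sup; first by exists (f t0), t0.
by move=> y [x _ <-].
Qed.

Lemma inf_img_lb (T : Type) (f : T -> R) (B : R) :
  (forall x, B <= f x) -> forall a, inf [set f x | x in [set: T]] <= f a.
Proof.
move=> hB a; apply: (ge_inf (E := [set f x | x in [set: T]])).
  by exists B => y [x _ <-].
by exists a.
Qed.

Lemma inf_img_ge (T : Type) (f : T -> R) (B : R) (t0 : T) :
  (forall x, B <= f x) -> B <= inf [set f x | x in [set: T]].
Proof.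
move=> hB; apply: lb_le_inf; first by exists (f t0), t0.
by move=> y [x _ <-].
Qed.

Definition dbnd (M : Lpre) := forall x y : M, 0 <= dist x y <= 1.

Fixpoint bnd (f : Aform) : R :=
  match f with
  | AOne => 1
  | ADist _ _ => 1
  | APlus a b => bnd a + bnd b
  | AScale r a => `|r| * bnd a
  | ASup _ a | AInf _ a => bnd a
  end.

Lemma aeval_bnd (M : Lpre) (H : dbnd M) f (e : nat -> M) : `|aeval e f| <= bnd f.
Proof.
elim: f e => [|t1 t2|a iha b ihb|r a iha|k a iha|k a iha] e /=.
- by rewrite normr1.
- by have := H (term_eval e t1) (term_eval e t2); case/andP=> h1 h2; rewrite ger0_norm.
- by apply: (le_trans (ler_normD _ _)); apply: lerD.
- by rewrite normrM; apply: ler_wpM2l => //.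
- have hb x : aeval (upd e k x) a <= bnd a by have := iha (upd e k x); rewrite ler_norml => /andP[].
  have hb' x : - bnd a <= aeval (upd e k x) a by have := iha (upd e k x); rewrite ler_norml => /andP[].
  rewrite ler_norml; apply/andP; split.
    apply: (le_trans (hb' (Lzero M))); exact: (sup_img_ub hb).
  exact: (sup_img_le (Lzero M) hb).
- have hb x : aeval (upd e k x) a <= bnd a by have := iha (upd e k x); rewrite ler_norml => /andP[].
  have hb' x : - bnd a <= aeval (upd e k x) a by have := iha (upd e k x); rewrite ler_norml => /andP[].
  rewrite ler_norml; apply/andP; split.
    exact: (inf_img_ge (Lzero M) hb').
  apply: (le_trans _ (hb (Lzero M))); exact: (inf_img_lb hb').
Qed.

Lemma aeval_ub (M : Lpre) (H : dbnd M) f (e : nat -> M) : aeval e f <= bnd f.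
Proof. by have := aeval_bnd H f e; rewrite ler_norml => /andP[]. Qed.
Lemma aeval_lb (M : Lpre) (H : dbnd M) f (e : nat -> M) : - bnd f <= aeval e f.
Proof. by have := aeval_bnd H f e; rewrite ler_norml => /andP[]. Qed.

Lemma asup_ge (M : Lpre) (H : dbnd M) k f (e : nat -> M) x :
  aeval (upd e k x) f <= aeval e (ASup k f).
Proof. exact: (sup_img_ub (fun y => aeval_ub H f (upd e k y))). Qed.

Lemma asup_le (M : Lpre) k f (e : nat -> M) B :
  (forall x, aeval (upd e k x) f <= B) -> aeval e (ASup k f) <= B.
Proof. exact: (sup_img_le (Lzero M)). Qed.

Lemma ainf_le (M : Lpre) (H : dbnd M) k f (e : nat -> M) x :
  aeval e (AInf k f) <= aeval (upd e k x) f.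
Proof. exact: (inf_img_lb (fun y => aeval_lb H f (upd e k y))). Qed.

Lemma ainf_ge (M : Lpre) k f (e : nat -> M) B :
  (forall x, B <= aeval (upd e k x) f) -> B <= aeval e (AInf k f).
Proof. exact: (inf_img_ge (Lzero M)). Qed.

Lemma term_ext (M : Lpre) (e1 e2 : nat -> M) t :
  (forall n, term_fv n t -> e1 n = e2 n) -> term_eval e1 t = term_eval e2 t.
Proof.
elim: t => [k||| a iha b ihb| a iha b ihb| a iha b ihb| a iha b ihb] /= h //;
  try by apply: h; rewrite eqxx.
all: by rewrite iha ?ihb // => n hn; apply: h; rewrite hn ?orbT.
Qed.

Lemma aeval_ext (M : Lpre) f (e1 e2 : nat -> M) :
  (forall n, form_fv n f -> e1 n = e2 n) -> aeval e1 f = aeval e2 f.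
Proof.
elim: f e1 e2 => [|t1 t2|a iha b ihb|r a iha|k a iha|k a iha] e1 e2 /= h //.
- by rewrite (term_ext (e1:=e1) (e2:=e2)) ?(term_ext (e1:=e1) (e2:=e2) (t:=t2)) // => n hn; apply: h; rewrite hn ?orbT.
- by rewrite (iha e1 e2) ?(ihb e1 e2) // => n hn; apply: h; rewrite hn ?orbT.
- by rewrite (iha e1 e2).
- have -> : (fun x => aeval (upd e1 k x) a) = (fun x => aeval (upd e2 k x) a); last by [].
  apply: funext => x; apply: iha => n hn; rewrite /upd; case: eqP => // /eqP nk.
  by apply: h; rewrite eq_sym nk hn.
- have -> : (fun x => aeval (upd e1 k x) a) = (fun x => aeval (upd e2 k x) a); last by [].
  apply: funext => x; apply: iha => n hn; rewrite /upd; case: eqP => // /eqP nk.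
  by apply: h; rewrite eq_sym nk hn.
Qed.

Fixpoint closeAll (K : nat) (f : Aform) : Aform :=
  match K with 0 => f | K'.+1 => AInf K' (closeAll K' f) end.

Lemma closeAll_fv n K f : form_fv n (closeAll K f) = (K <= n)%N && form_fv n f.
Proof.
elim: K => [|K ih] //=; rewrite ih andbA; congr (_ && _).
by rewrite ltn_neqAle.
Qed.

Lemma PA_dbnd (N : PApre) : dbnd (PA_to_L N).
Proof. by move=> x y /=; case: asboolP => _; rewrite ?lexx ?ler01. Qed.

Lemma AA_close K f : (forall n, form_fv n f -> (n < K)%N) ->
  (forall N, PA_model N -> forall e, 0 <= aeval (M := PA_to_L N) e f) ->
  AA (closeAll K f).
Proof.
move=> hfv hPA; split.
  move=> n; rewrite closeAll_fv; case h: (form_fv n f); last by rewrite andbF.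
  by rewrite andbT -ltnNge hfv.
move=> N hN; elim: K {hfv} => [|K ih] e; first exact: hPA.
by apply: ainf_ge => x; apply: ih.
Qed.

Lemma AA_use (M : Lpre) (HM : dbnd M) (HAA : models_AA M) K f :
  (forall n, form_fv n f -> (n < K)%N) ->
  (forall N, PA_model N -> forall e, 0 <= aeval (M := PA_to_L N) e f) ->
  forall e, 0 <= aeval (M := M) e f.
Proof.
move=> hfv hPA e; have := HAA _ (AA_close hfv hPA) e.
elim: K {hfv} e => [|K ih] e // h; apply: ih.
apply: (le_trans h); have := ainf_le HM K (closeAll K f) e (e K).
by rewrite upd_same.
Qed.

Section PAarith.
Variable N : PApre.
Hypothesis hN : PA_model N.
Local Notation "a +p b" := (padd a b) (at level 50, left associativity).
Local Notation p1 := (pone N).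
Local Notation p0 := (pzero N).

Lemma P_S0 x : x +p p1 <> p0. Proof. by move: hN; rewrite /PA_model => -[[]]. Qed.
Lemma P_Sinj x y : x +p p1 = y +p p1 -> x = y. Proof. by move: hN; rewrite /PA_model => -[[h0 hinj h00] hS hm0 hmS hind]; apply: hinj. Qed.
Lemma P_add0 x : x +p p0 = x. Proof. by move: hN; rewrite /PA_model => -[[]]. Qed.
Lemma P_addS x y : x +p (y +p p1) = (x +p y) +p p1. Proof. by move: hN; rewrite /PA_model => -[]. Qed.
Lemma P_ind (phi : Pform) n (e : nat -> N) :
  psat (upd e n p0) phi ->
  (forall a, psat (upd e n a) phi -> psat (upd e n (a +p p1)) phi) ->
  forall a, psat (upd e n a) phi.
Proof. by move: hN; rewrite /PA_model => -[] _ _ _ _; apply. Qed.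

Lemma P_add0l x : p0 +p x = x.
Proof.
have := @P_ind (PEq (PAdd PZero (PVar 0)) (PVar 0)) 0 (fun _ => x).
move=> h; apply: h => [|a] /=; rewrite ?upd_eq; first exact: P_add0.
by move=> ih; rewrite P_addS ih.
Qed.

Lemma P_addSl b z : (b +p p1) +p z = (b +p z) +p p1.
Proof.
have := @P_ind (PEq (PAdd (PAdd (PVar 1) POne) (PVar 0)) (PAdd (PAdd (PVar 1) (PVar 0)) POne))
   0 (fun _ => b).
move=> h; apply: h => [|a] /=; rewrite /upd /=; first by rewrite !P_add0.
by move=> ih; rewrite !P_addS ih.
Qed.

Lemma P_addA (x y z : N) : (x +p y) +p z = x +p (y +p z).
Proof.
have := @P_ind (PEq (PAdd (PAdd (PVar 1) (PVar 2)) (PVar 0)) (PAdd (PVar 1) (PAdd (PVar 2) (PVar 0))))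
   0 (fun k => if k == 1%N then x else y).
move=> h; apply: h => [|a] /=; rewrite /upd /=; first by rewrite !P_add0.
by move=> ih; rewrite !P_addS ih.
Qed.

Lemma P_le_refl (x : N) : PA_le x x. Proof. by exists p0; rewrite P_add0. Qed.

Lemma P_le_trans (x y z : N) : PA_le x y -> PA_le y z -> PA_le x z.
Proof. by move=> [u <-] [v <-]; exists (u +p v); rewrite P_addA. Qed.

Lemma P_le_add (b n : N) : PA_le b (b +p n). Proof. by exists n. Qed.

Lemma P_le_S (b p : N) : PA_le b p -> PA_le b (p +p p1).
Proof. by move=> [u <-]; exists (u +p p1); rewrite P_addS. Qed.

Lemma P_le0 (x : N) : PA_le p0 x. Proof. by exists x; rewrite P_add0l. Qed.

Lemma P_notle_Sx x : ~ PA_le (x +p p1) x.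
Proof.
have := @P_ind (PAll 1 (PImp (PEq (PAdd (PAdd (PVar 0) POne) (PVar 1)) (PVar 0)) PBot))
   0 (fun _ => x).
rewrite /upd /= => h [z hz]; move: z hz; apply: h => [z|a ih z].
  by rewrite P_addSl P_add0l => /P_S0.
by rewrite P_addSl => /P_Sinj /ih.
Qed.

End PAarith.

Definition Ptrue := PImp PBot PBot.
Definition Pnot a := PImp a PBot.
Definition Pand a b := Pnot (PImp a (Pnot b)).
Definition Por a b := PImp (Pnot a) b.
Definition Pex k a := Pnot (PAll k (Pnot a)).
Definition bigAnd (l : list Pform) := fold_right Pand Ptrue l.
Definition bigOr (l : list Pform) := fold_right Por PBot l.

Section PsatLemmas.
Variable N : PApre.
Implicit Types (e : nat -> N).

Lemma psat_true e : psat e Ptrue. Proof. by []. Qed.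
Lemma psat_not e a : psat e (Pnot a) <-> ~ psat e a. Proof. by []. Qed.
Lemma psat_and e a b : psat e (Pand a b) <-> psat e a /\ psat e b.
Proof.
rewrite /Pand /Pnot /=; split; last by move=> [ha hb] h; exact: h ha hb.
move=> h; split; apply: NNPP => hn; apply: h => //.
Qed.
Lemma psat_or e a b : psat e (Por a b) <-> psat e a \/ psat e b.
Proof.
rewrite /Por /Pnot /=; split; last by move=> [ha|hb] // h; case: (h ha).
by move=> h; case: (classic (psat e a)) => ha; [left|right; apply: h].
Qed.
Lemma psat_ex e k a : psat e (Pex k a) <-> exists x, psat (upd e k x) a.
Proof.
rewrite /Pex /Pnot /=; split; last by move=> [x hx] h; exact: h x hx.
move=> h; apply: NNPP => hn; apply: h => x hx; apply: hn; by exists x.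
Qed.
Lemma psat_bigAnd e l : psat e (bigAnd l) <-> forall a, In a l -> psat e a.
Proof.
elim: l => [|a l ih].
  split; first by move=> _ a.
  move=> _; exact: psat_true.
change (psat e (Pand a (bigAnd l)) <-> forall b, In b (a :: l) -> psat e b).
rewrite psat_and ih; split; first by move=> [ha hl] b [<-|hb]; [|apply: hl].
by move=> h; split; [apply: h; left|move=> b hb; apply: h; right].
Qed.
Lemma psat_bigOr e l : psat e (bigOr l) <-> exists a, In a l /\ psat e a.
Proof.
elim: l => [|a l ih]; first by split => [[]|[x []]].
change (psat e (Por a (bigOr l)) <-> exists b, In b (a :: l) /\ psat e b).
rewrite psat_or ih; split.
  by case=> [ha|[b [hb hb']]]; [exists a; split; [left|]|exists b; split; [right|]].
by move=> [b [[<-|hb] hb']]; [left|right; exists b].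
Qed.
End PsatLemmas.

Fixpoint pmv (s : Pterm) : nat :=
  match s with
  | PVar k => k.+1
  | PZero | POne => 0%N
  | PAdd a b | PMul a b => maxn (pmv a) (pmv b)
  end.

Lemma pterm_ext (N : PApre) (e1 e2 : nat -> N) s :
  (forall k, (k < pmv s)%N -> e1 k = e2 k) -> pterm_eval e1 s = pterm_eval e2 s.
Proof.
elim: s => [k|||a iha b ihb|a iha b ihb] /= h //; first by apply: h; rewrite ltnSn.
all: rewrite iha ?ihb // => k hk; apply: h; rewrite leq_max hk ?orbT //.
Qed.

Definition Ple s1 s2 :=
  let z := maxn (pmv s1) (pmv s2) in Pex z (PEq (PAdd s1 (PVar z)) s2).

Lemma psat_Ple (N : PApre) (e : nat -> N) s1 s2 :
  psat e (Ple s1 s2) <-> PA_le (pterm_eval e s1) (pterm_eval e s2).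
Proof.
rewrite /Ple psat_ex /=; set z := maxn _ _.
have h1 x : pterm_eval (upd e z x) s1 = pterm_eval e s1.
  apply: pterm_ext => k hk; rewrite upd_neq //; apply/eqP => hkz.
  by move: hk; rewrite hkz /z ltnNge leq_maxl.
have h2 x : pterm_eval (upd e z x) s2 = pterm_eval e s2.
  apply: pterm_ext => k hk; rewrite upd_neq //; apply/eqP => hkz.
  by move: hk; rewrite hkz /z ltnNge leq_maxr.
split; move=> [x hx]; exists x; move: hx; by rewrite h1 h2 upd_eq.
Qed.

Definition comb (A B C : Type) (f : A -> B -> list C) (l1 : list A) (l2 : list B) : list C :=
  flat_map (fun a => flat_map (f a) l2) l1.

Lemma In_comb (A B C : Type) (f : A -> B -> list C) l1 l2 c :
  In c (comb f l1 l2) <-> exists a b, [/\ In a l1, In b l2 & In c (f a b)].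
Proof.
rewrite /comb in_flat_map; split.
  by move=> [a [ha]]; rewrite in_flat_map => -[b [hb hc]]; exists a, b.
by move=> [a [b [ha hb hc]]]; exists a; split => //; rewrite in_flat_map; exists b.
Qed.

Fixpoint tr_term (t : Lterm) : list (Pform * Pterm) :=
  match t with
  | TVar k => [:: (Ptrue, PVar k)]
  | TZero => [:: (Ptrue, PZero)]
  | TOne => [:: (Ptrue, POne)]
  | TAdd a b => comb (fun x y => [:: (Pand x.1 y.1, PAdd x.2 y.2)]) (tr_term a) (tr_term b)
  | TMul a b => comb (fun x y => [:: (Pand x.1 y.1, PMul x.2 y.2)]) (tr_term a) (tr_term b)
  | TMeet a b => comb (fun x y => [:: (Pand (Pand x.1 y.1) (Ple x.2 y.2), x.2);
                                     (Pand (Pand x.1 y.1) (Pnot (Ple x.2 y.2)), y.2)])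
                      (tr_term a) (tr_term b)
  | TJoin a b => comb (fun x y => [:: (Pand (Pand x.1 y.1) (Ple x.2 y.2), y.2);
                                     (Pand (Pand x.1 y.1) (Pnot (Ple x.2 y.2)), x.2)])
                      (tr_term a) (tr_term b)
  end.

Section TrTerm.
Variable N : PApre.
Implicit Types (e : nat -> N).

Lemma tr_term_sound t e gs : In gs (tr_term t) -> psat e gs.1 ->
  term_eval (M := PA_to_L N) e t = pterm_eval e gs.2.
Proof.
elim: t gs => [k|||a iha b ihb|a iha b ihb|a iha b ihb|a iha b ihb] gs /=.
- by case=> // <-.
- by case=> // <-.
- by case=> // <-.
- move/In_comb=> [x [y [hx hy [<-|[]]]]] /psat_and [h1 h2] /=.
  by rewrite (iha x) // (ihb y).
- move/In_comb=> [x [y [hx hy [<-|[]]]]] /psat_and [h1 h2] /=.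
  by rewrite (iha x) // (ihb y).
- move/In_comb=> [x [y [hx hy [<-|[<-|[]]]]]] /psat_and [/psat_and [h1 h2] h3] /=;
  rewrite (iha x) // (ihb y) //; case: asboolP => // hle;
  first [by exfalso; apply: hle; apply/psat_Ple | by exfalso; apply: h3; apply/psat_Ple].
- move/In_comb=> [x [y [hx hy [<-|[<-|[]]]]]] /psat_and [/psat_and [h1 h2] h3] /=;
  rewrite (iha x) // (ihb y) //; case: asboolP => // hle;
  first [by exfalso; apply: hle; apply/psat_Ple | by exfalso; apply: h3; apply/psat_Ple].
Qed.

Lemma tr_term_exh t e : exists gs, In gs (tr_term t) /\ psat e gs.1.
Proof.
elim: t => [k|||a iha b ihb|a iha b ihb|a iha b ihb|a iha b ihb] /=.
- by eexists; split; [left|].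
- by eexists; split; [left|].
- by eexists; split; [left|].
- case: iha => x [hx hx']; case: ihb => y [hy hy'].
  exists (Pand x.1 y.1, PAdd x.2 y.2); split; last by rewrite psat_and.
  by rewrite In_comb; exists x, y; split => //; left.
- case: iha => x [hx hx']; case: ihb => y [hy hy'].
  exists (Pand x.1 y.1, PMul x.2 y.2); split; last by rewrite psat_and.
  by rewrite In_comb; exists x, y; split => //; left.
- case: iha => x [hx hx']; case: ihb => y [hy hy'].
  case: (classic (psat e (Ple x.2 y.2))) => hle.
    exists (Pand (Pand x.1 y.1) (Ple x.2 y.2), x.2); split; last by rewrite !psat_and.
    by rewrite In_comb; exists x, y; split => //; left.
  exists (Pand (Pand x.1 y.1) (Pnot (Ple x.2 y.2)), y.2); split; last by rewrite !psat_and.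
  by rewrite In_comb; exists x, y; split => //; right; left.
- case: iha => x [hx hx']; case: ihb => y [hy hy'].
  case: (classic (psat e (Ple x.2 y.2))) => hle.
    exists (Pand (Pand x.1 y.1) (Ple x.2 y.2), y.2); split; last by rewrite !psat_and.
    by rewrite In_comb; exists x, y; split => //; left.
  exists (Pand (Pand x.1 y.1) (Pnot (Ple x.2 y.2)), x.2); split; last by rewrite !psat_and.
  by rewrite In_comb; exists x, y; split => //; right; left.
Qed.
End TrTerm.

Definition supGuard k (L : list (Pform * R)) (gv : Pform * R) : Pform * R :=
  (Pand (Pex k gv.1) (PAll k (bigAnd (map (fun p => Pnot p.1) (filter (fun p => gv.2 < p.2) L)))), gv.2).
Definition infGuard k (L : list (Pform * R)) (gv : Pform * R) : Pform * R :=
  (Pand (Pex k gv.1) (PAll k (bigAnd (map (fun p => Pnot p.1) (filter (fun p => p.2 < gv.2) L)))), gv.2).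

Fixpoint tr_form (f : Aform) : list (Pform * R) :=
  match f with
  | AOne => [:: (Ptrue, 1)]
  | ADist t1 t2 => comb (fun x y => [:: (Pand (Pand x.1 y.1) (PEq x.2 y.2), 0);
                                       (Pand (Pand x.1 y.1) (Pnot (PEq x.2 y.2)), 1)])
                        (tr_term t1) (tr_term t2)
  | APlus a b => comb (fun x y => [:: (Pand x.1 y.1, x.2 + y.2)]) (tr_form a) (tr_form b)
  | AScale r a => map (fun x => (x.1, r * x.2)) (tr_form a)
  | ASup k a => map (supGuard k (tr_form a)) (tr_form a)
  | AInf k a => map (infGuard k (tr_form a)) (tr_form a)
  end.

Lemma list_max (A : Type) (f : A -> R) (P : A -> Prop) l :
  (exists a, In a l /\ P a) ->
  exists a, [/\ In a l, P a & forall b, In b l -> P b -> f b <= f a].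
Proof.
elim: l => [|x l ih]; first by move=> [a [[]]].
move=> hex; case: (classic (exists a, In a l /\ P a)) => [/ih [m [hm hPm hmax]]|hno].
  case: (classic (P x /\ f m < f x)) => [[hPx hlt]|hn].
    exists x; split => //; first by left.
    move=> b [<-|hb] hPb //; apply: (le_trans (hmax b hb hPb)); exact: ltW.
  exists m; split => //; first by right.
  move=> b [<-|hb] hPb; last exact: hmax.
  by rewrite leNgt; apply/negP => hlt; apply: hn.
have hPx : P x.
  case: hex => a [[<-|ha] hPa] //; case: hno; by exists a.
exists x; split => //; first by left.
move=> b [<-|hb] hPb //; case: hno; by exists b.
Qed.

Lemma sup_eq_max (S : set R) v : S v -> (forall y, S y -> y <= v) -> sup S = v.
Proof.
move=> hv hub; apply/eqP; rewrite eq_le; apply/andP; split.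
  by apply: ge_sup; [exists v|].
by apply: (ub_le_sup (E := S)); [exists v|].
Qed.

Lemma inf_eq_min (S : set R) v : S v -> (forall y, S y -> v <= y) -> inf S = v.
Proof.
move=> hv hlb; apply/eqP; rewrite eq_le; apply/andP; split.
  by apply: (ge_inf (E := S)); [exists v|].
by apply: lb_le_inf; [exists v|].
Qed.

Section TrForm.
Variable N : PApre.
Implicit Types (e : nat -> N).
Local Notation L := (PA_to_L N).

Lemma tr_form_ok f :
  (forall e gv, In gv (tr_form f) -> psat e gv.1 -> aeval (M := L) e f = gv.2) /\
  (forall e, exists gv, In gv (tr_form f) /\ psat e gv.1).
Proof.
elim: f => [|t1 t2|a [sa ea] b [sb eb]|r a [sa ea]|k a [sa ea]|k a [sa ea]].
- split; first by move=> e gv [<-|[]].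
  by move=> e; exists (Ptrue, 1); split; [left|].
- split.
    move=> e gv /In_comb [x [y [hx hy [<-|[<-|[]]]]]] /psat_and [/psat_and [h1 h2] h3] /=;
    rewrite (tr_term_sound hx h1) (tr_term_sound hy h2); case: asboolP => // hne;
    first [by case: (hne h3) | by case: (h3 hne)].
  move=> e; have [x [hx hx']] := tr_term_exh t1 e; have [y [hy hy']] := tr_term_exh t2 e.
  case: (classic (pterm_eval e x.2 = pterm_eval e y.2)) => heq.
    exists (Pand (Pand x.1 y.1) (PEq x.2 y.2), 0); split.
      by rewrite In_comb; exists x, y; split => //; left.
    by apply/psat_and; split => //; apply/psat_and.
  exists (Pand (Pand x.1 y.1) (Pnot (PEq x.2 y.2)), 1); split.
    by rewrite In_comb; exists x, y; split => //; right; left.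
  by apply/psat_and; split => //; apply/psat_and.
- split.
    move=> e gv /In_comb [x [y [hx hy [<-|[]]]]] /psat_and [h1 h2] /=.
    by rewrite (sa e x) // (sb e y).
  move=> e; have [x [hx hx']] := ea e; have [y [hy hy']] := eb e.
  exists (Pand x.1 y.1, x.2 + y.2); split; last by apply/psat_and.
  by rewrite In_comb; exists x, y; split => //; left.
- split.
    move=> e gv /in_map_iff [x [<- hx]] h /=; by rewrite (sa e x).
  move=> e; have [x [hx hx']] := ea e; exists (x.1, r * x.2); split => //.
  by apply/in_map_iff; exists x.
- split.
    move=> e gv /in_map_iff [x [<- hx]] /psat_and [/psat_ex [x0 hx0] hall] /=.
    apply: sup_eq_max; first by exists x0 => //; apply: sa.
    move=> _ [z _ <-]; have [w [hw hw']] := ea (upd e k z).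
    rewrite (sa _ w) //; rewrite leNgt; apply/negP => hlt.
    have := (proj1 (psat_bigAnd _ _) (hall z)) (Pnot w.1).
    apply => //; apply/in_map_iff; exists w; split => //.
    by apply/filter_In; split.
  move=> e.
  have hne : exists gv, In gv (tr_form a) /\ (exists z, psat (upd e k z) gv.1).
    have [w [hw hw']] := ea (upd e k (pzero N)); exists w; split => //; by exists (pzero N).
  have [x [hx hPx hmax]] := list_max snd hne.
  exists (supGuard k (tr_form a) x); split; first by apply/in_map_iff; exists x.
  apply/psat_and; split; first exact/psat_ex.
  move=> z /=; apply/psat_bigAnd => q /in_map_iff [w [<- /filter_In [hw hlt]]] hwz.
  have := hmax w hw (ex_intro _ z hwz); by rewrite leNgt hlt.
- split.
    move=> e gv /in_map_iff [x [<- hx]] /psat_and [/psat_ex [x0 hx0] hall] /=.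
    apply: inf_eq_min; first by exists x0 => //; apply: sa.
    move=> _ [z _ <-]; have [w [hw hw']] := ea (upd e k z).
    rewrite (sa _ w) //; rewrite leNgt; apply/negP => hlt.
    have := (proj1 (psat_bigAnd _ _) (hall z)) (Pnot w.1).
    apply => //; apply/in_map_iff; exists w; split => //.
    by apply/filter_In; split.
  move=> e.
  have hne : exists gv, In gv (tr_form a) /\ (exists z, psat (upd e k z) gv.1).
    have [w [hw hw']] := ea (upd e k (pzero N)); exists w; split => //; by exists (pzero N).
  have [x [hx hPx hmax]] := list_max (fun gv => - gv.2) hne.
  exists (infGuard k (tr_form a) x); split; first by apply/in_map_iff; exists x.
  apply/psat_and; split; first exact/psat_ex.
  move=> z /=; apply/psat_bigAnd => q /in_map_iff [w [<- /filter_In [hw hlt]]] hwz.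
  have := hmax w hw (ex_intro _ z hwz); by rewrite lerN2 leNgt hlt.
Qed.

Lemma tr_form_sound f e gv : In gv (tr_form f) -> psat e gv.1 -> aeval (M := L) e f = gv.2.
Proof. exact: (proj1 (tr_form_ok f)). Qed.
Lemma tr_form_exh f e : exists gv, In gv (tr_form f) /\ psat e gv.1.
Proof. exact: (proj2 (tr_form_ok f)). Qed.

Lemma tr_form_val f e : In (aeval (M := L) e f) (map snd (tr_form f)).
Proof.
have [gv [hin hs]] := tr_form_exh f e; rewrite (tr_form_sound hin hs).
by apply/in_map_iff; exists gv.
Qed.

Definition Sle f (v0 : R) := bigOr (map fst (filter (fun p => p.2 <= v0) (tr_form f))).

Lemma psat_Sle f v0 e : psat e (Sle f v0) <-> aeval (M := L) e f <= v0.
Proof.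
rewrite /Sle psat_bigOr; split.
  move=> [q [/in_map_iff [gv [<- /filter_In [hin hle]]] hq]].
  by rewrite (tr_form_sound hin hq).
move=> hle; have [gv [hin hs]] := tr_form_exh f e; exists gv.1; split => //.
apply/in_map_iff; exists gv; split => //; apply/filter_In; split => //.
by rewrite -(tr_form_sound hin hs).
Qed.
End TrForm.

Lemma list_posmin (l : list R) : exists m, 0 < m /\ forall d, In d l -> 0 < d -> m <= d.
Proof.
elim: l => [|x l [m [hm hl]]]; first by exists 1; split => //.
case: (boolP (0 < x)) => hx.
  case: (boolP (x < m)) => hxm.
    exists x; split => // d [<-|hd] hd0 //; apply: le_trans (ltW hxm) (hl d hd hd0).
  exists m; split => // d [<-|hd] hd0; last exact: hl.
  by rewrite leNgt.
exists m; split => // d [<-|hd] hd0; last exact: hl.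
by rewrite hd0 in hx.
Qed.

Lemma list_maxr (l : list R) : exists m, 0 <= m /\ forall d, In d l -> d <= m.
Proof.
elim: l => [|x l [m [hm hl]]]; first by exists 0; split => //.
case: (boolP (m < x)) => hxm.
  exists x; split; first exact: le_trans hm (ltW hxm).
  move=> d [<-|hd] //; apply: le_trans (hl d hd) (ltW hxm).
exists m; split => // d [<-|hd]; last exact: hl.
by rewrite leNgt.
Qed.

Definition diffs (l : list R) := flat_map (fun v1 => map (fun v2 => v1 - v2) l) l.

Lemma In_diffs l v1 v2 : In v1 l -> In v2 l -> In (v1 - v2) (diffs l).
Proof. by move=> h1 h2; apply/in_flat_map; exists v1; split => //; apply/in_map_iff; exists v2. Qed.

Lemma list_gap (l : list R) : exists gap Rb, [/\ 0 < gap, 0 <= Rb,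
  (forall v1 v2, In v1 l -> In v2 l -> v2 < v1 -> gap <= v1 - v2) &
  (forall v1 v2, In v1 l -> In v2 l -> v1 - v2 <= Rb)].
Proof.
have [m [hm hml]] := list_posmin (diffs l); have [M [hM hMl]] := list_maxr (diffs l).
exists m, M; split => // v1 v2 h1 h2; last exact/hMl/In_diffs.
by move=> hlt; apply: hml; [exact: In_diffs|rewrite subr_gt0].
Qed.

Section PAdist.
Variable N : PApre.
Lemma Pdist_eq (x : N) : dist (l:=PA_to_L N) x x = 0.
Proof. by rewrite /=; case: asboolP. Qed.
Lemma Pdist_neq (x y : N) : x <> y -> dist (l:=PA_to_L N) x y = 1.
Proof. by move=> h /=; case: asboolP. Qed.
Lemma Pmeet_le (x y : N) : PA_le x y -> Lmeet (l:=PA_to_L N) x y = x.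
Proof. by move=> h /=; case: asboolP. Qed.
Lemma Pmeet_nle (x y : N) : ~ PA_le x y -> Lmeet (l:=PA_to_L N) x y = y.
Proof. by move=> h /=; case: asboolP. Qed.
Lemma Pjoin_le (x y : N) : PA_le x y -> Ljoin (l:=PA_to_L N) x y = y.
Proof. by move=> h /=; case: asboolP. Qed.
Lemma Pjoin_nle (x y : N) : ~ PA_le x y -> Ljoin (l:=PA_to_L N) x y = x.
Proof. by move=> h /=; case: asboolP. Qed.
End PAdist.

Section KL.
Variable Phi : nat -> Aform.
Variable N0 : nat.
Hypothesis hFV : forall y n, (N0 <= y)%N -> form_fv n (Phi y) -> (n < N0)%N \/ n = y.
Hypothesis hRN : forall (M : Lpre) (e e' : nat -> M) y y', (N0 <= y)%N -> (N0 <= y')%N ->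
  (forall k, (k < N0)%N -> e k = e' k) -> e y = e' y' -> aeval e (Phi y) = aeval e' (Phi y').
Hypothesis hDEC : forall (N : PApre), PA_model N -> forall (e : nat -> N) a a', PA_le a a' ->
  aeval (M := PA_to_L N) (upd e N0 a') (Phi N0) <= aeval (M := PA_to_L N) (upd e N0 a) (Phi N0).

Definition Xf (L C2 C4 : R) :=
  APlus (Phi N0.+2) (APlus (AScale (-1) (Phi N0.+3))
   (APlus (AScale (-L) (APlus (Phi N0.+3) (AScale (-1) (Phi N0.+1))))
   (APlus (AScale (-C2) (ADist (TVar N0.+3) (TAdd (TVar N0.+2) TOne)))
          (AScale (-C4) (ADist (TMeet (TVar N0) (TVar N0.+2)) (TVar N0)))))).

Definition Tf (g L C2 C4 C5 : R) :=
  APlus (ASup N0.+2 (ASup N0.+3 (Xf L C2 C4)))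
   (APlus (AScale (-g) (APlus (Phi N0) (AScale (-1) (Phi N0.+1))))
          (AScale C5 (ADist (TMeet (TVar N0) (TVar N0.+1)) (TVar N0)))).

Lemma Tf_fv g L C2 C4 C5 n : form_fv n (Tf g L C2 C4 C5) -> (n < N0.+2)%N.
Proof.
rewrite /Tf /Xf /= => h.
repeat match goal with
  | H : is_true (_ || _) |- _ => case/orP: H => H
  | H : is_true (_ && _) |- _ => let H' := fresh in case/andP: H => H' H
  | H : is_true (form_fv _ (Phi ?y)) |- _ =>
       let H' := fresh in (have [H'|H'] : (n < N0)%N \/ n = y by apply: hFV H; lia); clear H
  | H : is_true (_ == _) |- _ => move/eqP: H => H
  end; try lia.
Qed.

Lemma KL : exists g, 0 < g /\ forall L C2 C4, 0 <= L -> exists C5,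
  forall N, PA_model N -> forall e, 0 <= aeval (M := PA_to_L N) e (Tf g L C2 C4 C5).
Proof.
have [gap [Rb [hgap hRb hgapP hRbP]]] := list_gap (map snd (tr_form (Phi N0))).
exists (gap / (Rb + 1)); split; first by apply: divr_gt0 => //; lra.
move=> L C2 C4 hL; exists (gap / (Rb + 1) * Rb + Rb + L * Rb) => N hN e.
set g := gap / (Rb + 1).
have hg : g * (Rb + 1) = gap by rewrite /g mulrC mulrA mulrC mulrA mulVf ?mul1r //; apply/eqP; lra.
have hg0 : 0 < g by apply: divr_gt0 => //; lra.
pose f a := aeval (M := PA_to_L N) (upd e N0 a) (Phi N0).
have fV a : In (f a) (map snd (tr_form (Phi N0))) by apply: tr_form_val.
have PhiE (e' : nat -> PA_to_L N) y : (N0 <= y)%N -> (forall k, (k < N0)%N -> e' k = e k) ->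
    aeval e' (Phi y) = f (e' y).
  move=> hy he; apply: hRN => // [k hk|]; last by rewrite upd_eq.
  by rewrite upd_neq ?he //; lia.
set C5 := g * Rb + Rb + L * Rb.
set b := e N0; set b' := e N0.+1.
have -> : aeval e (Tf g L C2 C4 C5) = aeval e (ASup N0.+2 (ASup N0.+3 (Xf L C2 C4))) +
   ((-g) * (aeval e (Phi N0) + (-1) * aeval e (Phi N0.+1)) +
    C5 * dist (l:=PA_to_L N) (Lmeet (l:=PA_to_L N) (e N0) (e N0.+1)) (e N0)) by [].
rewrite (PhiE e N0) // (PhiE e N0.+1) // -/b -/b'.
have XfE p c : aeval (upd (upd e N0.+2 p) N0.+3 c) (Xf L C2 C4) =
   f p - f c - L * (f c - f b') - C2 * dist (l:=PA_to_L N) c (padd p (pone N))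
   - C4 * dist (l:=PA_to_L N) (Lmeet (l:=PA_to_L N) b p) b.
  have h3 : upd (upd e N0.+2 p) N0.+3 c N0.+3 = c by rewrite upd_eq.
  have h2 : upd (upd e N0.+2 p) N0.+3 c N0.+2 = p by rewrite upd_neq ?upd_eq //; lia.
  have h1 : upd (upd e N0.+2 p) N0.+3 c N0.+1 = b' by rewrite !upd_neq //; lia.
  have h0 : upd (upd e N0.+2 p) N0.+3 c N0 = b by rewrite !upd_neq //; lia.
  have hk k : (k < N0)%N -> upd (upd e N0.+2 p) N0.+3 c k = e k by move=> hk; rewrite !upd_neq //; lia.
  rewrite /Xf [aeval _ _]/= !(PhiE (upd (upd e N0.+2 p) N0.+3 c)) ?h3 ?h2 ?h1 ?h0 //; try lia.
  rewrite /=; lra.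
suff [p [c hpc]] : exists p c, g * (f b - f b') - C5 * dist (l:=PA_to_L N) (Lmeet (l:=PA_to_L N) b b') b
     <= aeval (upd (upd e N0.+2 p) N0.+3 c) (Xf L C2 C4).
  have h1 := asup_ge (@PA_dbnd N) N0.+3 (Xf L C2 C4) (upd e N0.+2 p) c.
  have h2 := asup_ge (@PA_dbnd N) N0.+2 (ASup N0.+3 (Xf L C2 C4)) e p.
  lra.
have hR a a' : f a - f a' <= Rb by apply: hRbP.
have hG a a' : f a' < f a -> gap <= f a - f a' by apply: hgapP.
have hgR a a' : g * (f a - f a') <= gap.
  have := ler_wpM2l (ltW hg0) (hR a a'); lra.
have hgR' a a' : g * (f a - f a') <= g * Rb.
  have := ler_wpM2l (ltW hg0) (hR a a'); lra.
have hLR a a' : L * (f a - f a') <= L * Rb.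
  have := ler_wpM2l hL (hR a a'); lra.
case: (classic (PA_le b b')) => hbb; last first.
  have hbb' : b <> b' by move=> hb; apply: hbb; rewrite -hb; exact: (P_le_refl hN).
  rewrite Pmeet_nle // Pdist_neq; last by move=> h; apply: hbb'.
  exists b, (padd b (pone N)); rewrite XfE Pdist_eq Pmeet_le ?Pdist_eq; last exact: (P_le_refl hN).
  have := hLR (padd b (pone N)) b'; have := hgR' b b'; have := hR (padd b (pone N)) b.
  rewrite /C5; lra.
rewrite Pmeet_le // Pdist_eq.
have LNP : exists n, f (padd b n) <= f b' /\ (n = pzero N \/ exists m, n = padd m (pone N) /\ f b' < f (padd b m)).
  apply: NNPP => hno.
  pose Q := PAll N0 (PImp (PEq (PVar N0) (PAdd (PVar N0.+4.+1) (PVar N0.+4))) (Pnot (Sle (Phi N0) (f b')))).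
  pose eI := upd e N0.+4.+1 b.
  have Qsat a : psat (upd eI N0.+4 a) Q <-> ~ f (padd b a) <= f b'.
    have envE x : psat (upd (upd eI N0.+4 a) N0 x) (Sle (Phi N0) (f b')) <-> f x <= f b'.
      rewrite psat_Sle (PhiE _ N0) ?upd_eq // => k hk; rewrite /eI !upd_neq //; lia.
    have h5 x : upd (upd eI N0.+4 a) N0 x N0.+4.+1 = b.
      by rewrite /eI /upd; repeat (case: eqP => ? //; try lia).
    have h4 x : upd (upd eI N0.+4 a) N0 x N0.+4 = a.
      by rewrite /eI /upd; repeat (case: eqP => ? //; try lia).
    split.
      move=> h hle; apply: (h (padd b a)); last exact/envE.
      by rewrite /= upd_eq h5 h4.
    move=> h x hx /envE hs; apply: h; move: hx; rewrite /= upd_eq h5 h4.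
    by move=> <-.
  have hall : forall n, ~ f (padd b n) <= f b'.
    move=> n; apply/Qsat; move: n; apply: (P_ind hN).
      apply/Qsat; rewrite (P_add0 hN) => hle; apply: hno; exists (pzero N); split => //; first by rewrite (P_add0 hN).
      by left.
    move=> a /Qsat ha; apply/Qsat => hle; apply: hno; exists (padd a (pone N)); split => //.
    by right; exists a; split => //; rewrite ltNge; apply/negP.
  by case: hbb => n0 hn0; apply: (hall n0); rewrite hn0.
case: LNP => n [hn [hn0|[m [hnm hm]]]].
  subst n; rewrite (P_add0 hN) in hn; exists b', (padd b' (pone N)).
  rewrite XfE Pdist_eq Pmeet_le ?Pdist_eq //.
  have hd := hDEC hN e (P_le_S hN (P_le_refl hN b')).
  rewrite -/(f _) -/(f _) in hd.
  have := ler_wpM2l hL hd; have := ler_wpM2l (ltW hg0) hn; lra.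
subst n; exists (padd b m), (padd (padd b m) (pone N)).
rewrite XfE Pdist_eq Pmeet_le ?Pdist_eq; last exact: P_le_add.
rewrite -(P_addS hN) in hn *.
have := hG (padd b m) b' hm; have := hgR b b'.
have := ler_wpM2l hL hn; lra.
Qed.
End KL.

Section Mfacts.
Variable M : Lpre.
Hypothesis HM : is_Lstructure M.
Hypothesis HAA : models_AA M.
Implicit Types x y z u v w : M.

Lemma d_ge0 x y : 0 <= dist x y. Proof. by move: HM; rewrite /is_Lstructure => -[[h1 h2 h3 h4] h5 h6 [l1 l2 l3 l4]]; apply: h1. Qed.
Lemma d_le1 x y : dist x y <= 1. Proof. by move: HM; rewrite /is_Lstructure => -[[h1 h2 h3 h4] h5 h6 [l1 l2 l3 l4]]; apply: h5. Qed.
Lemma d_xx x : dist x x = 0. Proof. by move: HM; rewrite /is_Lstructure => -[[h1 h2 h3 h4] h5 h6 [l1 l2 l3 l4]]; apply/h2. Qed.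
Lemma d_eq0 x y : dist x y = 0 -> x = y. Proof. by move: HM; rewrite /is_Lstructure => -[[h1 h2 h3 h4] h5 h6 [l1 l2 l3 l4]]; move/h2. Qed.
Lemma d_sym x y : dist x y = dist y x. Proof. by move: HM; rewrite /is_Lstructure => -[[h1 h2 h3 h4] h5 h6 [l1 l2 l3 l4]]; apply: h3. Qed.
Lemma d_tri x y z : dist x z <= dist x y + dist y z. Proof. by move: HM; rewrite /is_Lstructure => -[[h1 h2 h3 h4] h5 h6 [l1 l2 l3 l4]]; apply: h4. Qed.
Lemma meet_lip x y x' y' : dist (Lmeet x y) (Lmeet x' y') <= Num.max (dist x x') (dist y y').
Proof. by move: HM; rewrite /is_Lstructure => -[[h1 h2 h3 h4] h5 h6 [l1 l2 l3 l4]]; apply: l3. Qed.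
Lemma M_dbnd : dbnd M. Proof. by move=> x y; rewrite d_ge0 d_le1. Qed.

Lemma meet_lipl x x' u : dist (Lmeet x u) (Lmeet x' u) <= dist x x'.
Proof.
apply: le_trans (meet_lip _ _ _ _) _; rewrite d_xx.
by rewrite ge_max lexx d_ge0.
Qed.
Lemma meet_lipr b v w : dist (Lmeet b v) (Lmeet b w) <= dist v w.
Proof.
apply: le_trans (meet_lip _ _ _ _) _; rewrite d_xx.
by rewrite ge_max lexx d_ge0.
Qed.

Lemma AAq (K : nat) (f : Aform) (l : list M) :
  (forall n, form_fv n f -> (n < K)%N) ->
  (forall N, PA_model N -> forall e, 0 <= aeval (M := PA_to_L N) e f) ->
  0 <= aeval (fun k => List.nth k l (Lzero M)) f.
Proof. by move=> h1 h2; apply: (AA_use M_dbnd HAA h1 h2). Qed.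
End Mfacts.

Section Evals.
Variable M : Lpre.
Implicit Types (e : nat -> M).
Lemma aeval_plusE e a b : aeval e (APlus a b) = aeval e a + aeval e b. Proof. by []. Qed.
Lemma aeval_scaleE e r a : aeval e (AScale r a) = r * aeval e a. Proof. by []. Qed.
Lemma aeval_distE e t1 t2 : aeval e (ADist t1 t2) = dist (term_eval e t1) (term_eval e t2). Proof. by []. Qed.
Lemma aeval_oneE e : aeval e AOne = 1. Proof. by []. Qed.
Lemma term_varE e k : term_eval e (TVar k) = e k. Proof. by []. Qed.
Lemma term_meetE e a b : term_eval e (TMeet a b) = Lmeet (term_eval e a) (term_eval e b). Proof. by []. Qed.
Lemma term_joinE e a b : term_eval e (TJoin a b) = Ljoin (term_eval e a) (term_eval e b). Proof. by []. Qed.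
Lemma term_addE e a b : term_eval e (TAdd a b) = Ladd (term_eval e a) (term_eval e b). Proof. by []. Qed.
Lemma term_oneE e : term_eval e TOne = Lone M. Proof. by []. Qed.
End Evals.
Definition aevalE := (aeval_plusE, aeval_scaleE, aeval_distE, aeval_oneE, term_varE,
  term_meetE, term_joinE, term_addE, term_oneE).

Section PAlat.
Variable N : PApre.
Hypothesis hN : PA_model N.
Local Notation L := (PA_to_L N).
Lemma Pmeet_char (a c : N) : Lmeet (l:=L) a c = a -> PA_le a c.
Proof. by rewrite /=; case: asboolP => // _ <-; apply: P_le_refl. Qed.
Lemma Pmeet_le_r (a c : N) : PA_le (Lmeet (l:=L) a c) c.
Proof. by rewrite /=; case: asboolP => // _; apply: P_le_refl. Qed.
Lemma Pjoin_lub (a b c : N) : PA_le a c -> PA_le b c -> PA_le (Ljoin (l:=L) a b) c.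
Proof. by rewrite /=; case: asboolP. Qed.
Lemma Pmeet_idem (a : N) : Lmeet (l:=L) a a = a.
Proof. by rewrite Pmeet_le //; apply: P_le_refl. Qed.
Lemma Pdist_sym (a c : N) : dist (l:=L) a c = dist (l:=L) c a.
Proof. by rewrite /=; do 2 case: asboolP => //; move=> h1 h2; [case: h1|case: h2]. Qed.
Lemma Pd_ge0 (a c : N) : 0 <= dist (l:=L) a c. Proof. by have /andP[] := PA_dbnd a c. Qed.
Lemma Pd_le1 (a c : N) : dist (l:=L) a c <= 1. Proof. by have /andP[] := PA_dbnd a c. Qed.
End PAlat.

Ltac fvtac := by case=> [|[|[|[|[|n]]]]].

Section Mlat.
Variable M : Lpre.
Hypothesis HM : is_Lstructure M.
Hypothesis HAA : models_AA M.
Implicit Types x y z u v w b p : M.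

Lemma M_meet_idem x : Lmeet x x = x.
Proof.
have := @AAq M HM HAA 1 (AScale (-1) (ADist (TMeet (TVar 0) (TVar 0)) (TVar 0))) [:: x].
move=> /(_ _ _) h; have {h} := h ltac:(fvtac) ltac:(by move=> N hN e; rewrite !aevalE (Pmeet_idem hN) Pdist_eq; lra).
rewrite /= => h; have : dist (Lmeet x x) x = 0 by have := d_ge0 HM (Lmeet x x) x; lra.
exact: d_eq0.
Qed.

Lemma d0_eq x y : 0 <= -1 * dist x y -> x = y.
Proof. move=> h; apply: (d_eq0 HM); have := d_ge0 HM x y; lra. Qed.

Lemma M_le_join b y : Lmeet b (Ljoin b y) = b.
Proof.
have := @AAq M HM HAA 2 (AScale (-1) (ADist (TMeet (TVar 0) (TJoin (TVar 0) (TVar 1))) (TVar 0))) [:: b; y].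
move=> /(_ ltac:(fvtac)) h; apply: d0_eq; apply: le_trans (h _) _; last by rewrite !aevalE.
move=> N hN e; rewrite !aevalE; case: (classic (PA_le (e 0%N) (e 1%N))) => hle.
  by rewrite Pjoin_le // Pmeet_le // Pdist_eq; lra.
by rewrite Pjoin_nle // Pmeet_idem // Pdist_eq; lra.
Qed.

Lemma M_join_dist x u : dist (Ljoin x u) u <= dist (Lmeet x u) x.
Proof.
have := @AAq M HM HAA 2 (APlus (ADist (TMeet (TVar 0) (TVar 1)) (TVar 0))
   (AScale (-1) (ADist (TJoin (TVar 0) (TVar 1)) (TVar 1)))) [:: x; u].
move=> /(_ ltac:(fvtac)) h; suff: 0 <= dist (Lmeet x u) x + (-1) * dist (Ljoin x u) u by lra.
apply: le_trans (h _) _; first last; first by rewrite !aevalE.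
move=> N hN e; rewrite !aevalE; case: (classic (PA_le (e 0%N) (e 1%N))) => hle.
  by rewrite Pjoin_le // Pdist_eq; have := Pd_ge0 (Lmeet (l:=PA_to_L N) (e 0%N) (e 1%N)) (e 0%N); lra.
by rewrite Pjoin_nle // Pmeet_nle // (Pdist_sym (e 0%N)); lra.
Qed.

Lemma M_meetS b p : dist (Lmeet b (Ladd p (Lone M))) b <= dist (Lmeet b p) b.
Proof.
have := @AAq M HM HAA 2 (APlus (ADist (TMeet (TVar 0) (TVar 1)) (TVar 0))
   (AScale (-1) (ADist (TMeet (TVar 0) (TAdd (TVar 1) TOne)) (TVar 0)))) [:: b; p].
move=> /(_ ltac:(fvtac)) h; suff: 0 <= dist (Lmeet b p) b + (-1) * dist (Lmeet b (Ladd p (Lone M))) b by lra.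
apply: le_trans (h _) _; first last; first by rewrite !aevalE.
move=> N hN e; rewrite !aevalE; case: (classic (PA_le (e 0%N) (e 1%N))) => hle.
  rewrite (Pmeet_le (y := Ladd (l:=PA_to_L N) (e 1%N) (Lone (PA_to_L N)))); last exact: P_le_S.
  by rewrite Pdist_eq; have := Pd_ge0 (Lmeet (l:=PA_to_L N) (e 0%N) (e 1%N)) (e 0%N); lra.
rewrite Pmeet_nle // Pdist_neq; last by move=> he; apply: hle; rewrite he; apply: P_le_refl.
by have := Pd_le1 (Lmeet (l:=PA_to_L N) (e 0%N) (Ladd (l:=PA_to_L N) (e 1%N) (Lone (PA_to_L N)))) (e 0%N); lra.
Qed.

Lemma M_meet_le w x : Lmeet (Lmeet w x) x = Lmeet w x.
Proof.
have := @AAq M HM HAA 2 (AScale (-1) (ADist (TMeet (TMeet (TVar 0) (TVar 1)) (TVar 1)) (TMeet (TVar 0) (TVar 1)))) [:: w; x].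
move=> /(_ ltac:(fvtac)) h; apply: d0_eq; apply: le_trans (h _) _; last by rewrite !aevalE.
move=> N hN e; rewrite !aevalE Pmeet_le ?Pdist_eq; last exact: Pmeet_le_r.
lra.
Qed.

Lemma M_L6 b x w : 1 <= dist (Ljoin b x) x +
   dist (Lmeet (Ladd x (Lone M)) (Ljoin b (Lmeet w x))) (Ladd x (Lone M)).
Proof.
have := @AAq M HM HAA 3 (APlus (APlus (ADist (TJoin (TVar 0) (TVar 1)) (TVar 1))
   (ADist (TMeet (TAdd (TVar 1) TOne) (TJoin (TVar 0) (TMeet (TVar 2) (TVar 1)))) (TAdd (TVar 1) TOne)))
   (AScale (-1) AOne)) [:: b; x; w].
move=> /(_ ltac:(fvtac)) h.
suff: 0 <= dist (Ljoin b x) x + dist (Lmeet (Ladd x (Lone M)) (Ljoin b (Lmeet w x))) (Ladd x (Lone M)) + (-1) * 1 by lra.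
apply: le_trans (h _) _; first last; first by rewrite !aevalE.
move=> N hN e; rewrite !aevalE.
set B := e 0%N; set X := e 1%N; set W := e 2%N.
case: (classic (Ljoin (l:=PA_to_L N) B X = X)) => hj; last first.
  rewrite (Pdist_neq hj).
  have := Pd_ge0 (Lmeet (l:=PA_to_L N) (Ladd (l:=PA_to_L N) X (Lone (PA_to_L N)))
     (Ljoin (l:=PA_to_L N) B (Lmeet (l:=PA_to_L N) W X))) (Ladd (l:=PA_to_L N) X (Lone (PA_to_L N))).
  lra.
have hbx : PA_le B X.
  case: (classic (PA_le B X)) => // hn; move: hj; rewrite Pjoin_nle // => ->; exact: P_le_refl.
have hv : PA_le (Ljoin (l:=PA_to_L N) B (Lmeet (l:=PA_to_L N) W X)) X.
  by apply: Pjoin_lub => //; apply: Pmeet_le_r.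
rewrite hj Pdist_eq Pdist_neq; first lra.
move/(Pmeet_char hN) => hle; apply: (P_notle_Sx hN (x := X)).
exact: P_le_trans hle hv.
Qed.

End Mlat.

Section PAtotal.
Variable N : PApre.
Hypothesis hN : PA_model N.

Lemma P_pred (z : N) : z = pzero N \/ exists z', z = padd z' (pone N).
Proof.
pose phi := Por (PEq (PVar 0) PZero) (Pex 1 (PEq (PVar 0) (PAdd (PVar 1) POne))).
have base : psat (upd (fun _ => z) 0 (pzero N)) phi.
  by apply/psat_or; left; rewrite /= upd_eq.
have step a : psat (upd (fun _ => z) 0 a) phi -> psat (upd (fun _ => z) 0 (padd a (pone N))) phi.
  move=> _; apply/psat_or; right; apply/psat_ex; exists a.
  by rewrite /= upd_neq // !upd_eq.
have := P_ind hN base step z; rewrite psat_or psat_ex /= upd_eq.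
case=> [->|[z' hz]]; [by left|right; exists z'; move: hz; rewrite upd_neq // !upd_eq].
Qed.

Lemma P_total (x y : N) : PA_le x y \/ PA_le y x.
Proof.
pose phi := PAll 1 (Por (Ple (PVar 0) (PVar 1)) (Ple (PVar 1) (PVar 0))).
have base : psat (upd (fun _ => x) 0 (pzero N)) phi.
  move=> z; change (psat (upd (upd (fun _ => x) 0 (pzero N)) 1 z) (Por (Ple (PVar 0) (PVar 1)) (Ple (PVar 1) (PVar 0)))).
  apply/psat_or; left; apply/psat_Ple; rewrite /= upd_eq upd_neq // upd_eq.
  exact: P_le0.
have step a : psat (upd (fun _ => x) 0 a) phi -> psat (upd (fun _ => x) 0 (padd a (pone N))) phi.
  move=> ha z; change (psat (upd (upd (fun _ => x) 0 (padd a (pone N))) 1 z) (Por (Ple (PVar 0) (PVar 1)) (Ple (PVar 1) (PVar 0)))).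
  have hz : psat (upd (upd (fun _ => x) 0 a) 1 z) (Por (Ple (PVar 0) (PVar 1)) (Ple (PVar 1) (PVar 0))) := ha z.
  move: hz; rewrite !psat_or !psat_Ple /= upd_eq upd_neq // !upd_eq.
  case=> [[w hw]|hza]; last by right; apply: P_le_S.
  case: (P_pred w) => [hw0|[w' hw']].
    by right; rewrite -hw hw0 P_add0 //; apply: P_le_S => //; apply: P_le_refl.
  left; exists w'; rewrite -hw hw' P_addS // P_addSl //.
have hxy : psat (upd (upd (fun _ => x) 0 x) 1 y) (Por (Ple (PVar 0) (PVar 1)) (Ple (PVar 1) (PVar 0))) := P_ind hN base step x y.
by move: hxy; rewrite psat_or !psat_Ple /= upd_eq upd_neq // upd_eq.
Qed.
End PAtotal.

Section Mlat2.
Variable M : Lpre.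
Hypothesis HM : is_Lstructure M.
Hypothesis HAA : models_AA M.

Lemma M_le_join_r (b y : M) : Lmeet y (Ljoin b y) = y.
Proof.
have := @AAq M HM HAA 2 (AScale (-1) (ADist (TMeet (TVar 1) (TJoin (TVar 0) (TVar 1))) (TVar 1))) [:: b; y].
move=> /(_ ltac:(fvtac)) h; apply: (d0_eq HM); apply: le_trans (h _) _; last by rewrite !aevalE.
move=> N hN e; rewrite !aevalE; case: (classic (PA_le (e 0%N) (e 1%N))) => hle.
  by rewrite Pjoin_le // (Pmeet_idem hN) Pdist_eq; lra.
rewrite Pjoin_nle // Pmeet_le ?Pdist_eq; first lra.
by case: (P_total hN (e 0%N) (e 1%N)).
Qed.
End Mlat2.

Section OverM.
Variable Phi : nat -> Aform.
Variable N0 : nat.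
Hypothesis hFV : forall y n, (N0 <= y)%N -> form_fv n (Phi y) -> (n < N0)%N \/ n = y.
Hypothesis hRN : forall (M : Lpre) (e e' : nat -> M) y y', (N0 <= y)%N -> (N0 <= y')%N ->
  (forall k, (k < N0)%N -> e k = e' k) -> e y = e' y' -> aeval e (Phi y) = aeval e' (Phi y').
Hypothesis hDEC : forall (N : PApre), PA_model N -> forall (e : nat -> N) a a', PA_le a a' ->
  aeval (M := PA_to_L N) (upd e N0 a') (Phi N0) <= aeval (M := PA_to_L N) (upd e N0 a) (Phi N0).

Variable M : Lpre.
Hypothesis HM : is_Lstructure M.
Hypothesis HAA : models_AA M.
Variable e0 : nat -> M.
Let V (a : M) := aeval (upd e0 N0 a) (Phi N0).

Lemma overspill_M L C2 C4 : 0 <= L -> forall b b' : M, dist (Lmeet b b') b = 0 ->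
  (forall p c, V p - V c - L * (V c - V b') - C2 * dist c (Ladd p (Lone M))
               - C4 * dist (Lmeet b p) b <= 0) -> V b <= V b'.
Proof.
move=> hL b b' hbb hX.
have [g [hg hK]] := KL hRN hDEC; have [C5 hC5] := hK L C2 C4 hL.
pose e := upd (upd e0 N0 b) N0.+1 b'.
have he k : (k < N0)%N -> e k = e0 k by move=> hk; rewrite /e !upd_neq //; lia.
have PhiV (e' : nat -> M) y : (N0 <= y)%N -> (forall k, (k < N0)%N -> e' k = e0 k) ->
    aeval e' (Phi y) = V (e' y).
  move=> hy he'; apply: hRN => // [k hk|]; last by rewrite upd_eq.
  by rewrite upd_neq ?he' //; lia.
have h0 := AA_use (M_dbnd HM) HAA (@Tf_fv Phi N0 hFV g L C2 C4 C5) hC5 e.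
have hT : aeval e (Tf Phi N0 g L C2 C4 C5) = aeval e (ASup N0.+2 (ASup N0.+3 (Xf Phi N0 L C2 C4))) +
   ((-g) * (aeval e (Phi N0) + (-1) * aeval e (Phi N0.+1)) +
    C5 * dist (Lmeet (e N0) (e N0.+1)) (e N0)) by [].
rewrite hT in h0.
have eb : e N0 = b by rewrite /e upd_neq ?upd_eq //; lia.
have eb' : e N0.+1 = b' by rewrite /e upd_eq.
rewrite (PhiV e N0) // (PhiV e N0.+1) // eb eb' hbb in h0.
have hS : aeval e (ASup N0.+2 (ASup N0.+3 (Xf Phi N0 L C2 C4))) <= 0.
  apply: asup_le => p; apply: asup_le => c.
  set e2 := upd (upd e N0.+2 p) N0.+3 c.
  have h3 : e2 N0.+3 = c by rewrite /e2 upd_eq.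
  have h2 : e2 N0.+2 = p by rewrite /e2 upd_neq ?upd_eq //; lia.
  have h1 : e2 N0.+1 = b' by rewrite /e2 !upd_neq //; lia.
  have h0' : e2 N0 = b by rewrite /e2 !upd_neq //; lia.
  have hk k : (k < N0)%N -> e2 k = e0 k by move=> hk; rewrite /e2 !upd_neq ?he //; lia.
  rewrite /Xf !aevalE !(PhiV e2) // ?h3 ?h2 ?h1 ?h0'; try lia.
  by have := hX p c; lra.
have := ler_wpM2l (ltW hg) (lexx (V b - V b')).
have : 0 <= g * (V b' - V b) -> V b <= V b'.
  by move=> h; move: h; rewrite pmulr_rge0 // subr_ge0.
move=> hfin _; apply: hfin.
have -> : g * (V b' - V b) = - g * (V b + -1 * V b') by ring.
lra.
Qed.
End OverM.

Fixpoint tmv (t : Lterm) : nat :=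
  match t with
  | TVar k => k.+1
  | TZero | TOne => 0%N
  | TAdd a b | TMul a b | TMeet a b | TJoin a b => maxn (tmv a) (tmv b)
  end.
Fixpoint fmv (f : Aform) : nat :=
  match f with
  | AOne => 0%N
  | ADist a b => maxn (tmv a) (tmv b)
  | APlus a b => maxn (fmv a) (fmv b)
  | AScale _ a => fmv a
  | ASup k a | AInf k a => maxn k.+1 (fmv a)
  end.

Lemma term_fv_lt n t : term_fv n t -> (n < tmv t)%N.
Proof.
elim: t => [k|||a iha b ihb|a iha b ihb|a iha b ihb|a iha b ihb] //=; first by move/eqP ->.
all: by case/orP => [/iha|/ihb]; rewrite leq_max => ->; rewrite ?orbT.
Qed.

Lemma form_fv_lt n f : form_fv n f -> (n < fmv f)%N.
Proof.
elim: f => [|t1 t2|a iha b ihb|r a iha|k a iha|k a iha] //=.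
- by case/orP => [/term_fv_lt|/term_fv_lt]; rewrite leq_max => ->; rewrite ?orbT.
- by case/orP => [/iha|/ihb]; rewrite leq_max => ->; rewrite ?orbT.
- by case/andP => _ /iha; rewrite leq_max => ->; rewrite ?orbT.
- by case/andP => _ /iha; rewrite leq_max => ->; rewrite ?orbT.
Qed.

Lemma asup_ext (M : Lpre) (e e' : nat -> M) k k' f f' :
  (forall x, aeval (upd e k x) f = aeval (upd e' k' x) f') -> aeval e (ASup k f) = aeval e' (ASup k' f').
Proof.
move=> h /=; have -> : (fun x => aeval (upd e k x) f) = (fun x => aeval (upd e' k' x) f') by apply: funext.
by [].
Qed.
Lemma ainf_ext (M : Lpre) (e e' : nat -> M) k k' f f' :
  (forall x, aeval (upd e k x) f = aeval (upd e' k' x) f') -> aeval e (AInf k f) = aeval e' (AInf k' f').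
Proof.
move=> h /=; have -> : (fun x => aeval (upd e k x) f) = (fun x => aeval (upd e' k' x) f') by apply: funext.
by [].
Qed.

Section Templates.
Variable phi : Aform.
Local Notation m := (fmv phi).

Definition Ft (y : nat) :=
  ASup 0 (APlus phi (AScale (-1) (ADist (TMeet (TVar y) (TVar 0)) (TVar y)))).
Definition Ht (y : nat) :=
  AInf 0 (APlus phi (APlus (AScale 2 (ADist (TMeet (TVar m.+1) (TVar 0)) (TVar m.+1)))
                           (AScale 2 (ADist (TMeet (TVar 0) (TVar y)) (TVar 0))))).

Lemma phi_ext (M : Lpre) (e e' : nat -> M) :
  (forall k, (k < m)%N -> e k = e' k) -> aeval e phi = aeval e' phi.
Proof. by move=> h; apply: aeval_ext => n /form_fv_lt; apply: h. Qed.

Lemma Ft_FV y n : (m.+2 <= y)%N -> form_fv n (Ft y) -> (n < m.+2)%N \/ n = y.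
Proof.
move=> hy /= /andP [hn0]; case/orP => [/form_fv_lt hn|]; first by left; lia.
case/orP => [/orP [/eqP ->|/eqP <-]|/eqP ->]; first [by right|by left; lia].
Qed.

Lemma Ht_FV y n : (m.+2 <= y)%N -> form_fv n (Ht y) -> (n < m.+2)%N \/ n = y.
Proof.
move=> hy /= /andP [hn0]; case/orP => [/form_fv_lt hn|]; first by left; lia.
case/orP => [/orP [/orP [/eqP <-|/eqP <-]|/eqP <-]|/orP [/orP [/eqP <-|/eqP ->]|/eqP <-]];
  first [by right|by left; lia].
Qed.

Lemma Ft_RN (M : Lpre) (e e' : nat -> M) y y' : (m.+2 <= y)%N -> (m.+2 <= y')%N ->
  (forall k, (k < m.+2)%N -> e k = e' k) -> e y = e' y' -> aeval e (Ft y) = aeval e' (Ft y').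
Proof.
move=> hy hy' he hyy.
apply: asup_ext => x; rewrite !aevalE !upd_eq !(upd_neq _ _ (j := y)) ?(upd_neq _ _ (j := y')); try lia.
  rewrite hyy (phi_ext (e := upd e 0 x) (e' := upd e' 0 x)) // => k hk.
  by rewrite /upd; case: eqP => // _; apply: he; lia.
Qed.

Lemma Ht_RN (M : Lpre) (e e' : nat -> M) y y' : (m.+2 <= y)%N -> (m.+2 <= y')%N ->
  (forall k, (k < m.+2)%N -> e k = e' k) -> e y = e' y' -> aeval e (Ht y) = aeval e' (Ht y').
Proof.
move=> hy hy' he hyy.
apply: ainf_ext => x; rewrite !aevalE !upd_eq !(upd_neq _ _ (j := y)) ?(upd_neq _ _ (j := y'))
    ?(upd_neq _ _ (j := m.+1)); try lia.
  rewrite hyy (he m.+1) // (phi_ext (e := upd e 0 x) (e' := upd e' 0 x)) // => k hk.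
  by rewrite /upd; case: eqP => // _; apply: he; lia.
Qed.

Lemma Ft_DEC (N : PApre) : PA_model N -> forall (e : nat -> N) a a', PA_le a a' ->
  aeval (M := PA_to_L N) (upd e m.+2 a') (Ft m.+2) <= aeval (M := PA_to_L N) (upd e m.+2 a) (Ft m.+2).
Proof.
move=> hN e a a' haa; apply: asup_le => w.
apply: le_trans (asup_ge (@PA_dbnd N) _ _ _ w).
rewrite !aevalE.
rewrite (@phi_ext (PA_to_L N) (upd (upd e m.+2 a') 0 w) (upd (upd e m.+2 a) 0 w)); last first.
  by move=> k hk; rewrite /upd; case: eqP => //; case: eqP => //; lia.
have e1 : upd (upd e m.+2 a') 0 w m.+2 = a' by rewrite upd_neq // upd_eq.
have e2 : upd (upd e m.+2 a) 0 w m.+2 = a by rewrite upd_neq // upd_eq.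
rewrite e1 e2 !upd_eq.
suff : dist (l:=PA_to_L N) (Lmeet (l:=PA_to_L N) a w) a <= dist (l:=PA_to_L N) (Lmeet (l:=PA_to_L N) a' w) a' by lra.
case: (classic (Lmeet (l:=PA_to_L N) a' w = a')) => h.
  rewrite h Pdist_eq Pmeet_le ?Pdist_eq //.
  exact: P_le_trans haa (Pmeet_char hN h).
by rewrite (Pdist_neq h); apply: Pd_le1.
Qed.

Lemma Ht_DEC (N : PApre) : PA_model N -> forall (e : nat -> N) a a', PA_le a a' ->
  aeval (M := PA_to_L N) (upd e m.+2 a') (Ht m.+2) <= aeval (M := PA_to_L N) (upd e m.+2 a) (Ht m.+2).
Proof.
move=> hN e a a' haa; apply: ainf_ge => w.
apply: le_trans (ainf_le (@PA_dbnd N) _ _ _ w) _.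
rewrite !aevalE.
rewrite (@phi_ext (PA_to_L N) (upd (upd e m.+2 a') 0 w) (upd (upd e m.+2 a) 0 w)); last first.
  by move=> k hk; rewrite /upd; case: eqP => //; case: eqP => //; lia.
have e1 : upd (upd e m.+2 a') 0 w m.+2 = a' by rewrite upd_neq // upd_eq.
have e2 : upd (upd e m.+2 a) 0 w m.+2 = a by rewrite upd_neq // upd_eq.
have e3 : upd (upd e m.+2 a') 0 w m.+1 = e m.+1 by rewrite !upd_neq //; lia.
have e4 : upd (upd e m.+2 a) 0 w m.+1 = e m.+1 by rewrite !upd_neq //; lia.
rewrite e1 e2 e3 e4 !upd_eq.
suff : dist (l:=PA_to_L N) (Lmeet (l:=PA_to_L N) w a') w <= dist (l:=PA_to_L N) (Lmeet (l:=PA_to_L N) w a) w by lra.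
case: (classic (Lmeet (l:=PA_to_L N) w a = w)) => h.
  rewrite h Pdist_eq Pmeet_le ?Pdist_eq //.
  exact: P_le_trans (Pmeet_char hN h) haa.
by rewrite (Pdist_neq h); apply: Pd_le1.
Qed.

End Templates.

Section DS.
Variable M : Lpre.
Hypothesis HM : is_Lstructure M.
Variable D : set M.
Variable y0 : M.
Hypothesis hy0 : D y0.

Lemma ds_ge0 w : 0 <= dist_set w D.
Proof.
apply: lb_le_inf; first by exists (dist w y0), y0.
by move=> _ [y _ <-]; apply: d_ge0.
Qed.
Lemma ds_le w y : D y -> dist_set w D <= dist w y.
Proof.
move=> hy; apply: (ge_inf (E := [set dist w y | y in D])); last by exists y.
by exists 0 => _ [z _ <-]; apply: d_ge0.
Qed.
Lemma ds_le1 w : dist_set w D <= 1.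
Proof. exact: le_trans (ds_le w hy0) (d_le1 HM _ _). Qed.
Lemma ds_D y : D y -> dist_set y D = 0.
Proof.
move=> hy; apply/eqP; rewrite eq_le ds_ge0 andbT.
by have := ds_le y hy; rewrite d_xx.
Qed.
Lemma ds_lip w v : dist_set w D <= dist w v + dist_set v D.
Proof.
suff : dist_set w D - dist w v <= dist_set v D by lra.
apply: lb_le_inf; first by exists (dist v y0), y0.
move=> _ [y hy <-]; have := ds_le w hy; have := d_tri HM w v y; lra.
Qed.
End DS.

Unset Implicit Arguments.

Theorem mainTheorem8 (M : Lpre) (HM : is_Lstructure M) (HAA : models_AA M)
  (I : set M) (HI : proper_cut I) (D : set M) (HD : formula_definable D) :
  ((forall y : M, ~ I y -> Mle (Lone M) y) ->
   (forall y : M, ~ I y -> D y) ->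
   forall eps : R, 0 < eps ->
     exists a : M, I a /\ (forall u : M, Mle a u -> thicken D eps u))
  /\
  ((forall x y : M, I x -> ~ I y -> Mlt x y) ->
   (forall a : M, ~ I a -> exists u : M, [/\ ~ I u, D u & Mle u a]) ->
   forall (eps : R) (b : M), 0 < eps -> I b ->
     exists v : M, [/\ I v, thicken D eps v & Mle b v]).
Proof.
have dbM := M_dbnd HM.
case: HD => hcl [phi [e0 hphi]].
case: HI => hcut hprop; move: hcut; rewrite /is_cut => -[[a0 ha0] hdown hsucc].
have [y hy] : exists y, ~ I y.
  apply: NNPP => h; apply: hprop; apply/seteqP; split => x // _.
  by apply: NNPP => hx; apply: h; exists x.
set m := fmv phi.
have phiE (e : nat -> M) w : (forall k, (0 < k)%N -> (k < m)%N -> e k = e0 k) ->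
    aeval (upd e 0 w) phi = dist_set w D.
  move=> he; rewrite hphi; apply: phi_ext => k hk; rewrite /upd; case: eqP => // /eqP hk0.
  by apply: he; lia.
split.
- move=> _ hcomp eps heps; apply: NNPP => hneg.
  have hA a : I a -> exists u, Mle a u /\ eps <= dist_set u D.
    move=> ha; apply: NNPP => hn; apply: hneg; exists a; split => // u hau.
    rewrite /thicken /= ltNge; apply/negP => hle; apply: hn; by exists u.
  have hy0 := hcomp y hy.
  pose Fv x := aeval (upd e0 m.+2 x) (Ft phi m.+2).
  have inner x w : aeval (upd (upd e0 m.+2 x) 0 w)
       (APlus phi (AScale (-1) (ADist (TMeet (TVar m.+2) (TVar 0)) (TVar m.+2))))
       = dist_set w D - dist (Lmeet x w) x.
    rewrite !aevalE phiE; last by move=> k hk0 hk; rewrite upd_neq //; lia.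
    rewrite upd_eq upd_neq // upd_eq; lra.
  have Fge x w : dist_set w D - dist (Lmeet x w) x <= Fv x.
    by rewrite -inner; apply: (asup_ge dbM 0).
  have Fle x B : (forall w, dist_set w D - dist (Lmeet x w) x <= B) -> Fv x <= B.
    by move=> h; apply: asup_le => w; rewrite inner.
  have F0 x : 0 <= Fv x.
    by apply: le_trans (Fge x x); rewrite (M_meet_idem HM HAA) (d_xx HM) subr0; apply: (ds_ge0 HM hy0).
  have F1 x : Fv x <= 1.
    apply: Fle => w; have := ds_le1 HM hy0 w; have := d_ge0 HM (Lmeet x w) x; lra.
  have Fout x : ~ I x -> Fv x <= 0.
    move=> hx; apply: Fle => w.
    have hv : ~ I (Ljoin x w).
      by move=> hv; apply: hx; apply: hdown hv; rewrite /Mle (M_le_join HM HAA).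
    have hD0 : dist_set (Ljoin x w) D = 0 := ds_D HM hy0 (hcomp _ hv).
    have := ds_lip HM hy0 w (Ljoin x w); rewrite hD0 addr0 (d_sym HM).
    have := M_join_dist HM HAA x w; lra.
  have Flip x z : Fv z <= Fv x + 2 * dist x z.
    apply: Fle => w; have := Fge x w.
    have := d_tri HM (Lmeet x w) (Lmeet z w) x; have := d_tri HM (Lmeet z w) z x.
    have := meet_lipl HM x z w; rewrite (d_sym HM z x); lra.
  have Fin a : I a -> eps <= Fv a.
    move=> ha; have [u [hau hu]] := hA a ha; have := Fge a u.
    rewrite hau (d_xx HM); lra.
  have hL : 0 <= 1 / eps by rewrite divr_ge0 // ltW.
  have hLe : 1 / eps * eps = 1 by rewrite mul1r mulVf //; apply/eqP; lra.
  have hb' : ~ I (Ljoin a0 y).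
    by move=> h; apply: hy; apply: hdown h; rewrite /Mle (M_le_join_r HM HAA).
  have key := overspill_M (@Ft_FV phi) (@Ft_RN phi) (@Ft_DEC phi) HM HAA (e0 := e0)
    (C2 := 2 * (1 + 1 / eps)) (C4 := 0) hL (b := a0) (b' := Ljoin a0 y).
  have : Fv a0 <= Fv (Ljoin a0 y).
    apply: key; first by rewrite (M_le_join HM HAA) (d_xx HM).
    move=> p c; cbv beta; rewrite -/(Fv p) -/(Fv c) -/(Fv (Ljoin a0 y)).
    have hb0 : Fv (Ljoin a0 y) = 0.
      by apply/eqP; rewrite eq_le F0 andbT; apply: Fout.
    rewrite hb0.
    have hdc := d_ge0 HM c (Ladd p (Lone M)).
    have hc0 := F0 c.
    have hLc : 0 <= 1 / eps * Fv c by apply: mulr_ge0.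
    have hLd : 0 <= 1 / eps * dist c (Ladd p (Lone M)) by apply: mulr_ge0.
    case: (classic (I p)) => hp; last first.
      have := Fout p hp; lra.
    have hp1 := Fin _ (hsucc p hp).
    have := Flip c (Ladd p (Lone M)); have := F1 p => h1 h2.
    have hprod : (1 + 1 / eps) * (eps - 2 * dist c (Ladd p (Lone M))) <= (1 + 1 / eps) * Fv c.
      by apply: ler_wpM2l; lra.
    lra.
  have := Fin a0 ha0; have := Fout _ hb'; lra.
- move=> hlt hex eps b heps hb; apply: NNPP => hneg.
  have hA v : I v -> Mle b v -> eps <= dist_set v D.
    move=> hv hbv; rewrite leNgt; apply/negP => hlt'; apply: hneg; exists v; split => //.
  have [u0 [_ hu0 _]] := hex y hy.
  pose e1 := upd e0 m.+1 b.
  pose Hv x := aeval (upd e1 m.+2 x) (Ht phi m.+2).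
  have inner x w : aeval (upd (upd e1 m.+2 x) 0 w)
       (APlus phi (APlus (AScale 2 (ADist (TMeet (TVar m.+1) (TVar 0)) (TVar m.+1)))
                         (AScale 2 (ADist (TMeet (TVar 0) (TVar m.+2)) (TVar 0)))))
       = dist_set w D + 2 * dist (Lmeet b w) b + 2 * dist (Lmeet w x) w.
    rewrite !aevalE phiE; last by move=> k hk0 hk; rewrite /e1 !upd_neq //; lia.
    have h1 : upd (upd e1 m.+2 x) 0 w m.+1 = b.
      by rewrite /e1 /upd; repeat (case: eqP => ? //; try lia).
    rewrite h1 upd_eq upd_neq // upd_eq; lra.
  have Hle x w : Hv x <= dist_set w D + 2 * dist (Lmeet b w) b + 2 * dist (Lmeet w x) w.
    by rewrite -inner; apply: (ainf_le dbM 0).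
  have Hge x B : (forall w, B <= dist_set w D + 2 * dist (Lmeet b w) b + 2 * dist (Lmeet w x) w) ->
      B <= Hv x.
    by move=> h; apply: ainf_ge => w; rewrite inner.
  have H0 x : 0 <= Hv x.
    apply: Hge => w; have := ds_ge0 HM hu0 w.
    have := d_ge0 HM (Lmeet b w) b; have := d_ge0 HM (Lmeet w x) w; lra.
  have Hout x : ~ I x -> Hv x <= 0.
    move=> hx; have [u [hu hDu hux]] := hex x hx.
    have [hbu _] := hlt b u hb hu.
    have hD0 : dist_set u D = 0 := ds_D HM hu0 hDu.
    have := Hle x u; rewrite hbu hux !(d_xx HM) hD0; lra.
  have Hlip x z : Hv z <= Hv x + 2 * dist x z.
    suff : Hv z - 2 * dist x z <= Hv x by lra.
    apply: Hge => w; have := Hle z w.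
    have := d_tri HM (Lmeet w z) (Lmeet w x) w; have := meet_lipr HM w z x.
    rewrite (d_sym HM z x); lra.
  have Hin x : I x -> dist (Lmeet b x) b < 1 -> eps <= Hv x.
    move=> hx hbx; apply: Hge => w.
    set v := Lmeet w x.
    have hv : I v by apply: hdown hx; rewrite /Mle /v (M_meet_le HM HAA).
    have hv' : I (Ljoin b v).
      apply: NNPP => hn.
      have [h1 _] := hlt _ _ (hsucc x hx) hn.
      have := M_L6 HM HAA b x w; rewrite -/v h1 (d_xx HM).
      have := M_join_dist HM HAA b x; lra.
    have heps' := hA _ hv' (M_le_join HM HAA b v).
    have := ds_lip HM hu0 (Ljoin b v) w.
    have := d_tri HM (Ljoin b v) v w.
    have := M_join_dist HM HAA b v.
    have := d_tri HM (Lmeet b v) (Lmeet b w) b.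
    have := meet_lipr HM b v w.
    have := d_ge0 HM (Lmeet b w) b.
    have := d_ge0 HM v w.
    rewrite /v; lra.
  have hL : 0 <= 2 / eps by rewrite divr_ge0 // ltW.
  have hLe : 2 / eps * eps = 2 by rewrite -mulrA mulVf ?mulr1 //; apply/eqP; lra.
  have [hby _] := hlt b y hb hy.
  have key := overspill_M (@Ht_FV phi) (@Ht_RN phi) (@Ht_DEC phi) HM HAA (e0 := e1)
    (C2 := 2 * (1 + 2 / eps)) (C4 := 4) hL (b := b) (b' := y).
  have : Hv b <= Hv y.
    apply: key; first by rewrite hby (d_xx HM).
    move=> p c; cbv beta; rewrite -/(Hv p) -/(Hv c) -/(Hv y).
    have hb0 : Hv y = 0.
      by apply/eqP; rewrite eq_le H0 andbT; apply: Hout.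
    rewrite hb0.
    have hdc := d_ge0 HM c (Ladd p (Lone M)).
    have hc0 := H0 c.
    have hLc : 0 <= 2 / eps * Hv c by apply: mulr_ge0.
    have hLd : 0 <= 2 / eps * dist c (Ladd p (Lone M)) by apply: mulr_ge0.
    have hg := d_ge0 HM (Lmeet b p) b.
    have hHp : Hv p <= 1 + 2 * dist (Lmeet b p) b.
      have := Hle p b; rewrite (M_meet_idem HM HAA) (d_xx HM); have := ds_le1 HM hu0 b.
      rewrite (d_sym HM (Lmeet b p) b); lra.
    case: (classic (I p)) => hp; last first.
      have := Hout p hp; lra.
    case: (boolP (dist (Lmeet b p) b < 1 / 2)) => hgam; last first.
      rewrite -leNgt in hgam; lra.
    have hp1 : eps <= Hv (Ladd p (Lone M)).
      apply: Hin; first exact: hsucc.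
      have := M_meetS HM HAA b p; lra.
    have := Hlip c (Ladd p (Lone M)) => h2.
    have hprod : (1 + 2 / eps) * (eps - 2 * dist c (Ladd p (Lone M))) <= (1 + 2 / eps) * Hv c.
      by apply: ler_wpM2l; lra.
    lra.
  have := Hin b hb; rewrite (M_meet_idem HM HAA) (d_xx HM) => /(_ ltac:(lra)).
  have := Hout _ hy; lra.
Qed.
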